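(* Let $L$ be a finite-dimensional Lie algebra over a field of characteristic zero. Then $E(L)$ is a characteristic ideal of $L$ (an ideal invariant under every derivation of $L$), and consequently $E(L)\subseteq N(L)$.
   Context: For $x\in L$, $\operatorname{ad}x:L\to L$ is $\operatorname{ad}x(y)=[y,x]$, and $E_L(x)=\{y\in L\mid (\operatorname{ad}x)^n(y)=0 \text{ for some } n\in\mathbb{N}\}$. An element $y$ is an Engel element of $L$ if $y\in E_L(x)$ for all $x\in L$; $E(L)$ denotes the set of all Engel elements of $L$. $N(L)$ denotes the nilradical of $L$, i.e. its largest nilpotent ideal. *)

(* Defs.v *)
From HB Require Import structures.
From mathcomp Require Import all_boot all_order all_algebra.
Set Implicit Arguments. Unset Strict Implicit. Unset Printing Implicit Defensive.
Import GRing.Theory.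
Local Open Scope ring_scope.

Section Lie.
Variables (F : fieldType) (V : vectType F).

Record is_lie_bracket (br : V -> V -> V) : Prop := {
  lie_linl : forall (a : F) (x y z : V), br (a *: x + y) z = a *: br x z + br y z;
  lie_linr : forall (a : F) (x y z : V), br z (a *: x + y) = a *: br z x + br z y;
  lie_alt : forall x : V, br x x = 0;
  lie_jacobi : forall x y z : V,
      br x (br y z) + br y (br z x) + br z (br x y) = 0
}.

Variable br : V -> V -> V.

(* ad x (y) = [y, x], as in the paper *)
Definition ad (x : V) : V -> V := fun y => br y x.

Definition engel_set (x : V) : V -> Prop :=
  fun y => exists n : nat, iter n (ad x) y = 0.

Definition engel_elt (y : V) : Prop := forall x : V, engel_set x y.

(* ideals (subspaces I with [I, L] <= I; by anticommutativity also [L, I] <= I) *)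
Definition is_ideal (I : {vspace V}) : Prop :=
  forall x y : V, x \in I -> br x y \in I.

Definition is_derivation (D : V -> V) : Prop :=
  (forall (a : F) (x y : V), D (a *: x + y) = a *: D x + D y) /\
  (forall x y : V, D (br x y) = br (D x) y + br x (D y)).

Definition is_char_ideal (I : {vspace V}) : Prop :=
  is_ideal I /\ forall D : V -> V, is_derivation D -> forall x, x \in I -> D x \in I.

(* [I, J] : the subspace spanned by all brackets [u, v], u in I, v in J
   (by bilinearity, spanned by brackets of basis vectors) *)
Definition brspace (I J : {vspace V}) : {vspace V} :=
  <<[seq br u v | u <- vbasis I, v <- vbasis J]>>%VS.

(* lower central series of I as a Lie algebra: I^1 = I, I^(k+1) = [I, I^k] *)
Fixpoint lcs (I : {vspace V}) (k : nat) : {vspace V} :=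
  match k with
  | 0 => I
  | k'.+1 => brspace I (lcs I k')
  end.

Definition is_nilpotent (I : {vspace V}) : Prop := exists k : nat, lcs I k = 0%VS.

Definition is_nilradical (N : {vspace V}) : Prop :=
  [/\ is_ideal N, is_nilpotent N &
      forall I : {vspace V}, is_ideal I -> is_nilpotent I -> (I <= N)%VS].

End Lie.

(* Main.v *)
Require Import Defs.
From HB Require Import structures.
From mathcomp Require Import all_boot all_order all_algebra.
From mathcomp Require Import zify.
From Stdlib Require Import Classical.
Set Implicit Arguments. Unset Strict Implicit. Unset Printing Implicit Defensive.
Import GRing.Theory.
Local Open Scope ring_scope.



Section Lie.
Variables (F : fieldType) (V : vectType F) (br : V -> V -> V).
Hypothesis hL : is_lie_bracket br.

Lemma brDl x y z : br (x + y) z = br x z + br y z.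
Proof. by have := lie_linl hL 1 x y z; rewrite !scale1r. Qed.
Lemma brDr x y z : br z (x + y) = br z x + br z y.
Proof. by have := lie_linr hL 1 x y z; rewrite !scale1r. Qed.
Lemma br0l z : br 0 z = 0.
Proof. have h := brDl 0 0 z; rewrite addr0 in h.
have: br 0 z + br 0 z = br 0 z + 0 by rewrite addr0 -h.
by move/addrI. Qed.
Lemma br0r z : br z 0 = 0.
Proof. have h := brDr 0 0 z; rewrite addr0 in h.
have: br z 0 + br z 0 = br z 0 + 0 by rewrite addr0 -h.
by move/addrI. Qed.
Lemma brZl a x z : br (a *: x) z = a *: br x z.
Proof. by have := lie_linl hL a x 0 z; rewrite addr0 br0l addr0. Qed.
Lemma brZr a x z : br z (a *: x) = a *: br z x.
Proof. by have := lie_linr hL a x 0 z; rewrite addr0 br0r addr0. Qed.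
Lemma brNl x z : br (- x) z = - br x z.
Proof. by rewrite -scaleN1r brZl scaleN1r. Qed.
Lemma brNr x z : br z (- x) = - br z x.
Proof. by rewrite -scaleN1r brZr scaleN1r. Qed.
Lemma br_anti x y : br x y = - br y x.
Proof.
have := lie_alt hL (x + y); rewrite brDl !brDr !lie_alt // add0r addr0.
by move/eqP; rewrite addr_eq0 => /eqP.
Qed.
Lemma br_der a b z : br (br a b) z = br (br a z) b + br a (br b z).
Proof.
have := lie_jacobi hL a b z.
rewrite [br z (br a b)]br_anti [br b (br z a)]br_anti [br z a]br_anti brNl opprK.
by move/subr0_eq => <-; rewrite addrC.
Qed.

Lemma ad_lin x a u v : ad br x (a *: u + v) = a *: ad br x u + ad br x v.
Proof. exact: lie_linl. Qed.
Lemma ad0 x : ad br x 0 = 0.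
Proof. exact: br0l. Qed.
Lemma iter_ad0 x n : iter n (ad br x) 0 = 0.
Proof. by elim: n => //= n ->; rewrite ad0. Qed.
Lemma iter_ad_lin x n a u v :
  iter n (ad br x) (a *: u + v) = a *: iter n (ad br x) u + iter n (ad br x) v.
Proof. by elim: n => //= n ->; rewrite ad_lin. Qed.
Lemma iter_ad_add x m n v : iter n (ad br x) v = 0 -> iter (m + n) (ad br x) v = 0.
Proof. by move=> h; rewrite iterD h iter_ad0. Qed.

End Lie.



Section VS.
Variables (F : fieldType) (V : vectType F).

Lemma dim_lt (U W : {vspace V}) v : (U <= W)%VS -> v \in W -> v \notin U ->
  (\dim U < \dim W)%N.
Proof.
move=> sUW vW vU; rewrite (ltn_leqif (dimv_leqif_sup sUW)).
by apply/negP => /subvP/(_ v vW); rewrite (negbTE vU).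
Qed.

Lemma dim_le_full (U : {vspace V}) : (\dim U <= dim V)%N.
Proof. by rewrite -dimvf dimvS // subvf. Qed.

Lemma linpred_vspace (P : V -> Prop) : P 0 ->
  (forall a u v, P u -> P v -> P (a *: u + v)) ->
  exists E : {vspace V}, forall v, v \in E <-> P v.
Proof.
move=> P0 PL.
have PD u v : P u -> P v -> P (u + v) by move=> *; rewrite -[u]scale1r; apply: PL.
have PZ a u : P u -> P (a *: u) by move=> *; rewrite -[_ *: _]addr0; apply: PL.
suff: forall k (U : {vspace V}), (forall v, v \in U -> P v) ->
    (dim V - \dim U <= k)%N -> exists E : {vspace V}, forall v, v \in E <-> P v.
  move/(_ (dim V) 0%VS); apply; last by rewrite leq_subr.
  by move=> v; rewrite memv0 => /eqP ->.
have step : forall U : {vspace V}, (forall v, v \in U -> P v) ->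
    (exists E : {vspace V}, forall v, v \in E <-> P v) \/
    exists U' : {vspace V}, (forall v, v \in U' -> P v) /\ (\dim U < \dim U')%N.
  move=> U hU; case: (classic (forall v, P v -> v \in U)) => [h|h].
    by left; exists U => v; split; [apply: hU | apply: h].
  right; have [v Hv] := not_all_ex_not _ _ h.
  have [Pv vU] : P v /\ v \notin U.
    by split; [ apply: NNPP => nP; apply: Hv => /nP | apply/negP => vU; apply: Hv].
  exists (U + <[v]>)%VS; split.
    move=> w /memv_addP[u uU [w' /vlineP[a ->] ->]].
    by apply: PD; [apply: hU | apply: PZ].
  apply: (dim_lt (v := v)) => //; first exact: addvSl.
  apply/memv_addP; exists 0; first exact: mem0v.
  by exists v; [apply: memv_line | rewrite add0r].
elim=> [|k IH] U hU hk; case: (step U hU) => // [[U' [hU' lt]]].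
  by have := dim_le_full U'; lia.
by apply: (IH U' hU'); have := dim_le_full U'; lia.
Qed.

End VS.



Section Stab.
Variables (F : fieldType) (V : vectType F) (br : V -> V -> V).
Hypothesis hL : is_lie_bracket br.

Lemma stab x y n : iter n (ad br x) y = 0 -> iter (dim V) (ad br x) y = 0.
Proof.
set A := ad br x.
have Klin j : exists K : {vspace V}, forall v, v \in K <-> iter j A v = 0.
  apply: linpred_vspace; first exact: iter_ad0.
  by move=> a u v hu hv; rewrite iter_ad_lin // hu hv scaler0 addr0.
pose Q j := forall v, iter j.+1 A v = 0 -> iter j A v = 0.
have QS j : Q j -> Q j.+1.
  move=> hQ v; rewrite iterSr => /hQ; rewrite -iterSr; done.
have Qup j m : Q j -> (j <= m)%N -> Q m.
  move=> hQ; elim: m => [|m IHm]; first by rewrite leqn0 => /eqP <-.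
  by rewrite leq_eqVlt => /orP[/eqP <- //| /IHm /QS].
have Qdown j : Q j -> forall m, (j <= m)%N -> forall v, iter m A v = 0 -> iter j A v = 0.
  move=> hQ; elim=> [|m IHm]; first by rewrite leqn0 => /eqP -> .
  rewrite leq_eqVlt => /orP[/eqP <- //| hjm] v hv.
  by apply: IHm => //; apply: (Qup j m hQ hjm).
have dims j : forall K : {vspace V}, (forall v, v \in K <-> iter j A v = 0) ->
    (exists i, (i <= j)%N /\ Q i) \/ (j <= \dim K)%N.
  elim: j => [|j IHj] K hK; first by right.
  have [Kj hKj] := Klin j.
  case: (IHj Kj hKj) => [[i [hi hQ]]|hd]; first by left; exists i; split => //; lia.
  case: (classic (Q j)) => [hQ|hQ]; first by left; exists j; split.
  right; have [v Hv] := not_all_ex_not _ _ hQ.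
  have [h1 h2] := imply_to_and _ _ Hv.
  have lt : (\dim Kj < \dim K)%N.
    apply: (dim_lt (v := v)).
    - by apply/subvP => w /hKj hw; apply/hK; rewrite iterS hw /A ad0.
    - exact/hK.
    - by apply/negP => /hKj.
  lia.
have [K hK] := Klin (dim V).
move=> hn; case: (dims _ K hK) => [[i [hi hQ]]|hd].
  case: (leqP n (dim V)) => hnd.
    by rewrite -(subnK hnd) iter_ad_add.
  have := Qdown i hQ n (leq_trans hi (ltnW hnd)) y hn.
  by move=> hy; rewrite -(subnK hi) iter_ad_add.
apply/hK.
have -> : K = fullv by apply/eqP; rewrite eqEdim subvf dimvf.
exact: memvf.
Qed.
End Stab.



Section Poly.
Variables (F : fieldType) (V : vectType F) (br : V -> V -> V).
Hypothesis hL : is_lie_bracket br.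
Let brDl := brDl hL. Let brDr := brDr hL. Let br0l := br0l hL. Let br0r := br0r hL.
Let brZl := brZl hL. Let brZr := brZr hL. Let brNl := brNl hL. Let brNr := brNr hL.
Let br_anti := br_anti hL. Let br_der := br_der hL.

Fixpoint Wc (x w : V) (k : nat) (v : V) (m : nat) : V :=
  match k with
  | 0 => if m == 0%N then v else 0
  | k'.+1 => ad br x (Wc x w k' v m) +
             (if m is m'.+1 then ad br w (Wc x w k' v m') else 0)
  end.

Lemma Wc0 x w k v : Wc x w k v 0 = iter k (ad br x) v.
Proof. by elim: k => //= k ->; rewrite addr0. Qed.

Lemma Wc_big x w k v m : (k < m)%N -> Wc x w k v m = 0.
Proof.
elim: k m => [|k IH] [|m] //= h.
by rewrite !IH /ad ?br0l ?addr0 //; lia.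
Qed.

Lemma ad_sum z n (f : 'I_n -> V) : ad br z (\sum_(i < n) f i) = \sum_(i < n) ad br z (f i).
Proof. by apply: (big_morph (ad br z)) => [u v|]; [exact: brDl | exact: br0l]. Qed.

Lemma Wc_eval x w k v t :
  iter k (ad br (x + t *: w)) v = \sum_(m < k.+1) t ^+ m *: Wc x w k v m.
Proof.
elim: k => [|k IH].
  by rewrite big_ord_recl big_ord0 /= addr0 scale1r.
rewrite iterS IH ad_sum.
have -> : \sum_(i < k.+1) ad br (x + t *: w) (t ^+ i *: Wc x w k v i) =
  \sum_(i < k.+1) t ^+ i *: ad br x (Wc x w k v i) +
  \sum_(i < k.+1) t ^+ i.+1 *: ad br w (Wc x w k v i).
  rewrite -big_split; apply: eq_bigr => i _ /=.
  by rewrite /ad brZl brDr brZr scalerDr scalerA -exprSr.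
rewrite /= (eq_bigr (fun m : 'I_k.+2 => t ^+ m *: ad br x (Wc x w k v m) +
  t ^+ m *: (if nat_of_ord m is m'.+1 then ad br w (Wc x w k v m') else 0)));
  last by move=> i _; rewrite scalerDr.
rewrite big_split /=; congr (_ + _).
  by rewrite [RHS]big_ord_recr /= Wc_big // /ad br0l scaler0 addr0.
by rewrite [RHS]big_ord_recl /= scaler0 add0r.
Qed.

End Poly.



Section Zero.
Variables (F : fieldType) (V : vectType F).
Hypothesis hF : [pchar F] =i pred0.

Lemma natr_inj m n : (m%:R : F) = n%:R -> m = n.
Proof.
wlog: m n / (m <= n)%N.
  by move=> H; case: (leqP m n) => h; [apply: H | move=> e; symmetry; apply: H => //; lia].
move=> hmn e; have: ((n - m)%:R : F) = 0 by rewrite natrB // e subrr.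
move/eqP; rewrite (proj1 (pcharf0P F) hF) => /eqP; lia.
Qed.

Lemma zero_coef n (c : nat -> V) :
  (forall t : F, \sum_(m < n) t ^+ m *: c m = 0) -> forall m, (m < n)%N -> c m = 0.
Proof.
move=> h m hm; rewrite (coord_vbasis (memvf (c m))); apply: big1 => i _.
suff -> : coord (vbasis fullv) i (c m) = 0 by rewrite scale0r.
set p := \poly_(j < n) coord (vbasis fullv) i (c j).
have pt t : p.[t] = 0.
  rewrite horner_poly; have := congr1 (coord (vbasis fullv) i) (h t).
  rewrite linear_sum linear0 => e; rewrite -[RHS]e; apply: eq_bigr => j _.
  by rewrite linearZ /= mulrC.
have p0 : p = 0.
  apply/eqP; apply/negP => /negP pn0.
  have := max_poly_roots pn0 (rs := [seq k%:R | k <- iota 0 (size p)]).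
  rewrite size_map size_iota ltnn => H; apply: notF; apply: H.
    by apply/allP => r /mapP [k _ ->]; apply/rootP; exact: pt.
  by rewrite map_inj_uniq ?iota_uniq // => a b; exact: natr_inj.
by have := congr1 (fun q : {poly F} => q`_m) p0; rewrite coef_poly hm coef0.
Qed.
End Zero.



Section Key.
Variables (F : fieldType) (V : vectType F) (br : V -> V -> V).
Hypothesis hF : [pchar F] =i pred0.
Hypothesis hL : is_lie_bracket br.
Let brDl := brDl hL. Let brDr := brDr hL. Let br0l := br0l hL. Let br0r := br0r hL.
Let brZl := brZl hL. Let brZr := brZr hL. Let brNl := brNl hL. Let brNr := brNr hL.
Let br_anti := br_anti hL. Let br_der := br_der hL.

Lemma engel_unif x y : engel_elt br y -> iter (dim V) (ad br x) y = 0.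
Proof. by move=> /(_ x) [n hn]; exact: (stab hL hn). Qed.

Lemma key x w y : engel_elt br y -> Wc br x w (dim V) y 1 = 0.
Proof.
move=> hy; case: (ltnP 0 (dim V)) => hd; last by rewrite Wc_big //; lia.
apply: (zero_coef hF (n := (dim V).+1) (c := Wc br x w (dim V) y)); last lia.
by move=> t; rewrite -(Wc_eval hL); apply: engel_unif.
Qed.

Lemma der0 D : is_derivation br D -> D 0 = 0.
Proof.
case=> hl _; have := hl 1 0 0; rewrite scaler0 scale1r addr0 => h.
have: D 0 + D 0 = D 0 + 0 by rewrite addr0 -h.
by move/addrI.
Qed.

Lemma der_iter D x y k : is_derivation br D ->
  D (iter k (ad br x) y) = iter k (ad br x) (D y) + Wc br x (D x) k y 1.
Proof.
move=> hD; elim: k => [|k IH] /=; first by rewrite addr0.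
rewrite /ad (proj2 hD) IH Wc0 brDl -!addrA; congr (_ + _); congr (_ + _).
Qed.

Lemma engel_der D y : is_derivation br D -> engel_elt br y -> engel_elt br (D y).
Proof.
move=> hD hy x; exists (dim V).
have := der_iter x y (dim V) hD.
by rewrite engel_unif // der0 // key // addr0 => <-.
Qed.

Lemma inner_der z : is_derivation br (fun v => br v z).
Proof. by split; [move=> a u v; exact: (lie_linl hL) | move=> u v; exact: br_der]. Qed.

Lemma engel_vspace : exists E : {vspace V}, forall v, v \in E <-> engel_elt br v.
Proof.
apply: linpred_vspace.
  by move=> x; exists 0%N.
move=> a u v hu hv x; exists (dim V).
by rewrite (iter_ad_lin hL) !engel_unif // scaler0 addr0.
Qed.

End Key.



Lemma max_nat (P : nat -> Prop) b : (exists n, P n) -> (forall n, P n -> (n <= b)%N) ->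
  exists n, P n /\ forall m, P m -> (m <= n)%N.
Proof.
elim: b => [|b IH] [n Pn] hb.
  by exists n; split => // m /hb; rewrite leqn0 => /eqP ->.
case: (classic (P b.+1)) => [Pb|nPb]; first by exists b.+1; split => // m /hb.
apply: IH; first by exists n.
move=> m Pm; have := hb m Pm; rewrite leq_eqVlt => /orP[/eqP e|] //.
by rewrite e in Pm.
Qed.

Section EngelFix.
Variables (F : fieldType) (V : vectType F) (br : V -> V -> V).
Hypothesis hL : is_lie_bracket br.
Let brDl := brDl hL. Let brDr := brDr hL. Let br0l := br0l hL. Let br0r := br0r hL.
Let brZl := brZl hL. Let brZr := brZr hL. Let brNl := brNl hL. Let brNr := brNr hL.
Let br_anti := br_anti hL. Let br_der := br_der hL.
Variable E : {vspace V}.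
Hypothesis Hn : forall a b, a \in E -> b \in E -> exists n, iter n (ad br a) b = 0.

Definition subalg (K : {vspace V}) := forall a b, a \in K -> b \in K -> br a b \in K.

Lemma pick_notsub (U W : {vspace V}) : ~~ (U <= W)%VS -> exists v, v \in U /\ v \notin W.
Proof.
move=> h; apply: NNPP => hn; move/negP: h; apply; apply/subvP => v vU.
by apply: NNPP => vW; apply: hn; exists v; split => //; apply/negP.
Qed.

Lemma engel_fix n : forall K : {vspace V}, (\dim K <= n)%N -> subalg K -> (K <= E)%VS ->
  forall U W : {vspace V}, (U <= E)%VS -> ~~ (U <= W)%VS ->
  (forall u k, u \in U -> k \in K -> br u k \in U) ->
  (forall u k, u \in W -> k \in K -> br u k \in W) ->
  exists v, [/\ v \in U, v \notin W & forall k, k \in K -> br v k \in W].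
Proof.
have K0 : forall K : {vspace V}, K = 0%VS -> forall U W : {vspace V}, ~~ (U <= W)%VS ->
    exists v, [/\ v \in U, v \notin W & forall k, k \in K -> br v k \in W].
  move=> K -> U W /pick_notsub [v [vU vW]]; exists v; split => // k.
  by rewrite memv0 => /eqP ->; rewrite br0r mem0v.
elim: n => [|n IH] K hK sK KE U W UE nUW hU hW.
  by apply: K0 => //; apply/eqP; rewrite -dimv_eq0; rewrite leqn0 in hK.
case: (eqVneq K 0%VS) => [eK|Kn0]; first exact: (K0 K eK U W nUW).
pose P j := exists M : {vspace V}, [/\ subalg M, (M <= K)%VS, ~~ (K <= M)%VS & \dim M = j].
have [j [[M [sM MK nKM dM]] Mmax]] : exists j, P j /\ forall m, P m -> (m <= j)%N.
  apply: (max_nat (b := \dim K)).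
    exists 0%N, 0%VS; split => //; rewrite ?sub0v ?dimv0 // ?subv0 //.
    by move=> a b; rewrite !memv0 => /eqP -> _; rewrite br0l.
  by move=> m [M [_ MK _ <-]]; apply: dimvS.
have dMK : (\dim M < \dim K)%N by rewrite (ltn_leqif (dimv_leqif_sup MK)).
have ME : (M <= E)%VS := subv_trans MK KE.
have [z [zK zM hz]] : exists z, [/\ z \in K, z \notin M & forall m, m \in M -> br z m \in M].
  apply: (IH M _ sM ME K M KE nKM); first lia.
  - by move=> u k uK kM; apply: sK => //; apply: (subvP MK).
  - by move=> u k uM kM; apply: sM.
set M' := (M + <[z]>)%VS.
have inM' m c : m \in M -> m + c *: z \in M'.
  by move=> mM; apply: memv_add => //; apply: memvZ; apply: memv_line.
have sM' : subalg M'.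
  move=> a b /memv_addP[m1 m1M [w1 /vlineP[c1 ->] ->]] /memv_addP[m2 m2M [w2 /vlineP[c2 ->] ->]].
  rewrite brDl brZl !brDr !brZr (lie_alt hL) scaler0 addr0.
  have hm1 : br m1 z \in M by rewrite br_anti memvN; apply: hz.
  rewrite -addrA; apply: memvD; first by apply: (subvP (addvSl M <[z]>)); apply: sM.
  apply: memvD; first by apply: memvZ; apply: (subvP (addvSl M <[z]>)).
  by apply: memvZ; apply: (subvP (addvSl M <[z]>)); apply: hz.
have M'K : (M' <= K)%VS by rewrite subv_add MK -memvE.
have KM' : (K <= M')%VS.
  apply: NNPP => /negP nKM'.
  have : P (\dim M') by exists M'.
  move/Mmax; rewrite -dM.
  have : (\dim M < \dim M')%N.
    apply: (dim_lt (v := z)); first exact: addvSl.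
      by apply: (subvP (addvSr M <[z]>)); apply: memv_line.
    exact: zM.
  lia.
have [u [uU uW hu]] : exists u, [/\ u \in U, u \notin W & forall m, m \in M -> br u m \in W].
  apply: (IH M _ sM ME U W UE nUW); first lia.
    by move=> u k uU kM; apply: hU => //; apply: (subvP MK).
  by move=> u k uW' kM; apply: hW => //; apply: (subvP MK).
pose Pz v := v \in U /\ forall m, m \in M -> br v m \in W.
have Pit jj : Pz (iter jj (ad br z) u).
  elim: jj => [|jj [IU IM]] /=; first by split.
  split; first by apply: hU.
  move=> m mM; rewrite /ad br_der; apply: memvD.
    by apply: hW => //; apply: IM.
  by apply: IM; apply: hz.
have [N hN] := Hn (subvP KE _ zK) (subvP UE _ uU).
have [i [iW iW1]] : exists i, iter i (ad br z) u \notin W /\ iter i.+1 (ad br z) u \in W.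
  suff: forall j, iter j (ad br z) u \in W ->
      exists i, iter i (ad br z) u \notin W /\ iter i.+1 (ad br z) u \in W.
    by move=> H; apply: (H N); rewrite hN mem0v.
  elim=> [|j2 IHj] hj; first by rewrite hj in uW.
  case: (boolP (iter j2 (ad br z) u \in W)) => [/IHj //|hj']; by exists j2.
have [PU PM] := Pit i.
exists (iter i (ad br z) u); split => // k /(subvP KM') /memv_addP[m mM [w /vlineP[c ->] ->]].
rewrite brDr brZr; apply: memvD; first exact: PM.
by apply: memvZ.
Qed.

End EngelFix.



Section Nil.
Variables (F : fieldType) (V : vectType F) (br : V -> V -> V).
Hypothesis hF : [pchar F] =i pred0.
Hypothesis hL : is_lie_bracket br.
Let brDl := brDl hL. Let brDr := brDr hL. Let br0l := br0l hL. Let br0r := br0r hL.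
Let brZl := brZl hL. Let brZr := brZr hL. Let brNl := brNl hL. Let brNr := brNr hL.
Let br_anti := br_anti hL. Let br_der := br_der hL.
Variable E : {vspace V}.
Hypothesis hE : forall v, v \in E <-> engel_elt br v.

Lemma E_ideal x y : x \in E -> br x y \in E.
Proof. by move/hE => hx; apply/hE; exact: (engel_der hF hL (inner_der hL y) hx). Qed.

Lemma E_nil a b : a \in E -> b \in E -> exists n, iter n (ad br a) b = 0.
Proof. by move=> _ /hE /(_ a). Qed.

Fixpoint Cp (j : nat) (v : V) : Prop :=
  match j with
  | 0 => v = 0
  | j'.+1 => v \in E /\ forall e, e \in E -> Cp j' (br v e)
  end.

Lemma Cp0 j : Cp j 0.
Proof. by elim: j => //= j IH; split; [exact: mem0v | move=> e _; rewrite br0l]. Qed.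

Lemma Cp_lin j a u v : Cp j u -> Cp j v -> Cp j (a *: u + v).
Proof.
elim: j u v => [|j IH] u v /=; first by move=> -> ->; rewrite scaler0 addr0.
move=> [uE hu] [vE hv]; split; first by apply: memvD => //; apply: memvZ.
by move=> e eE; rewrite (lie_linl hL); apply: IH; [apply: hu | apply: hv].
Qed.

Lemma Cp_up j v : Cp j v -> Cp j.+1 v.
Proof.
elim: j v => [|j IH] v /=; first by move=> ->; split; [exact: mem0v | move=> e _; rewrite br0l].
by move=> [vE hv]; split => // e eE; apply: IH; apply: hv.
Qed.

Lemma Cp_inv j v e : Cp j v -> e \in E -> Cp j (br v e).
Proof. by move/Cp_up => [_ h] /h. Qed.

Lemma Cp_N j v : Cp j v -> Cp j (- v).
Proof. by move=> h; rewrite -[- v]addr0 -scaleN1r; apply: Cp_lin => //; apply: Cp0. Qed.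

Lemma Cvs j : exists C : {vspace V}, forall v, v \in C <-> Cp j v.
Proof. by apply: linpred_vspace; [apply: Cp0 | move=> *; apply: Cp_lin]. Qed.

Lemma growth j : forall C : {vspace V}, (forall v, v \in C <-> Cp j v) ->
  (E <= C)%VS \/ (j <= \dim C)%N.
Proof.
elim: j => [|j IH] C hC; first by right.
have [Cj hCj] := Cvs j.
have CjC : (Cj <= C)%VS by apply/subvP => v /hCj /Cp_up /hC.
case: (boolP (E <= Cj)%VS) => [ECj|nECj].
  left; apply/subvP => e eE; apply/hC; split => // e' e'E.
  by apply/hCj; apply: (subvP ECj); apply: E_ideal.
case: (IH Cj hCj) => [h|hd]; first by rewrite h in nECj.
have [v [vE vCj hv]] := engel_fix hL E_nil (leqnn (\dim E)) (fun a b aE _ => E_ideal b aE)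
  (subvv E) (subvv E) nECj (fun u k uE _ => E_ideal k uE)
  (fun u k uC kE => proj2 (hCj _) (Cp_inv (proj1 (hCj u) uC) kE)).
right; have : (\dim Cj < \dim C)%N.
  apply: (dim_lt (v := v)) => //.
  by apply/hC; split => // e eE; apply/hCj; apply: hv.
lia.
Qed.

Lemma all_E e : e \in E -> Cp (dim V).+1 e.
Proof.
move=> eE; have [C hC] := Cvs (dim V).+1.
case: (growth hC) => [/subvP/(_ e eE)/hC //|].
by have := dim_le_full C; lia.
Qed.

Lemma lcs_C k : (k <= (dim V).+1)%N -> forall v, v \in lcs br E k -> Cp ((dim V).+1 - k) v.
Proof.
elim: k => [|k IH] hk v /=; first by rewrite ?subn0; apply: all_E.
have e1 : ((dim V).+1 - k = (dim V - k).+1)%N by lia.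
have e2 : ((dim V).+1 - k.+1 = dim V - k)%N by lia.
rewrite e2; have [C hC] := Cvs (dim V - k).
suff sub : (brspace br E (lcs br E k) <= C)%VS by move/(subvP sub)/hC.
apply/span_subvP => x /allpairsP [[a b] [/= aE bL ->]].
apply/hC; rewrite br_anti; apply: Cp_N.
have := IH (ltnW hk) b (vbasis_mem bL); rewrite e1 => -[_ h].
by apply: h; apply: vbasis_mem.
Qed.

Lemma E_nilpotent : is_nilpotent br E.
Proof.
exists (dim V).+1; apply/eqP; rewrite -subv0; apply/subvP => v hv.
by rewrite memv0; have := lcs_C (leqnn _) hv; rewrite subnn /= => ->.
Qed.

End Nil.

Theorem theorem2p2 (F : fieldType) (hF : [pchar F] =i pred0)
    (V : vectType F) (br : V -> V -> V) (hL : is_lie_bracket br) :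
  (exists E : {vspace V},
      (forall y : V, y \in E <-> engel_elt br y) /\ is_char_ideal br E) /\
  (forall N : {vspace V}, is_nilradical br N ->
      forall y : V, engel_elt br y -> y \in N).
Proof.
have [E hE] := engel_vspace hL.
split.
  exists E; split => //; split; first by move=> x y; apply: E_ideal.
  by move=> D hD x /hE hx; apply/hE; exact: (engel_der hF hL hD hx).
move=> N [NI _ Nmax] y hy.
have : (E <= N)%VS.
  apply: Nmax; first by move=> x z; apply: E_ideal.
  exact: E_nilpotent.
by move/subvP; apply; apply/hE.
Qed.
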